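(* In the setting below, assume that (I) $g$ is self-reciprocal, (II) $l$ is self-reciprocal, (III) $\gcd(t_{22},g_{12})=1$, and (IV) $\gcd\big(r_{22},\ g_{11}\bar g_{11}+g_{12}\bar g_{12}\big)=1$. Then for every irreducible factor $h_j$ of $x^m-1$ that is not self-reciprocal, the constituents satisfy $C_j'\cap (C_j'')^{\perp_e}=\{\mathbf 0\}$ and $C_j''\cap (C_j')^{\perp_e}=\{\mathbf 0\}$.
   Context: Let $q$ be a prime power, $F=\mathbb{F}_q$, $m\ge1$ with $\gcd(q,m)=1$. For a nonzero polynomial $f$ of degree $k$, $f^*(x)=x^kf(x^{-1})$; $f$ is self-reciprocal if $f^*=\alpha f$ for some $\alpha\in F$. For a polynomial $f$ of degree at most $m$, $\bar f(x)=x^m f(x^{-1})$. Let $g_{11},g_{12},g_{22}\in F[x]$ satisfy $g_{11}\mid x^m-1$, $g_{22}\mid x^m-1$, $\deg g_{12}<\deg g_{22}$, $g_{11}g_{22}\mid (x^m-1)g_{12}$ (these generate the quasi-cyclic code $C=\langle (g_{11},g_{12}),(0,g_{22})\rangle\subseteq (F[x]/\langle x^m-1\rangle)^2$). Define $g=\gcd(g_{11},g_{22})$, $l=(x^m-1)/\mathrm{lcm}(g_{11},g_{22})$, $g_{11}=g\,g_{11}'$, $g_{22}=g\,g_{22}'$, $r_{22}=\gcd(g_{22}',g_{22}'^* )$, $t_{22}=g_{22}'/r_{22}$. Let $\xi$ be a primitive $m$-th root of unity in an extension of $F$. Let $h_j$ be an irreducible factor of $x^m-1$ over $F$ that is not self-reciprocal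 (so $h_j^*$ is, up to a scalar, a different irreducible factor), and let $\xi^{v_j}$ be a root of $h_j$; let $K_j=F(\xi^{v_j})$. The constituent $C_j'\subseteq K_j^2$ is the $K_j$-span of the rows $(g_{11}(\xi^{v_j}),g_{12}(\xi^{v_j}))$, $(0,g_{22}(\xi^{v_j}))$, and the constituent $C_j''\subseteq K_j^2$ is the $K_j$-span of the rows $(\bar g_{11}(\xi^{v_j}),\bar g_{12}(\xi^{v_j}))$, $(0,\bar g_{22}(\xi^{v_j}))$. For $D\subseteq K_j^2$, $D^{\perp_e}$ is its dual with respect to the standard bilinear form $c_1d_1+c_2d_2$. *)

(* Defs.v *)
From HB Require Import structures.
From mathcomp Require Import all_boot all_order all_algebra all_field.
Set Implicit Arguments. Unset Strict Implicit. Unset Printing Implicit Defensive.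
Import GRing.Theory.
Local Open Scope ring_scope.

(* Reciprocal f^*(x) = x^(deg f) f(1/x): coefficient i is f_(deg f - i). *)
Definition recip (F : fieldType) (f : {poly F}) : {poly F} :=
  \poly_(i < size f) f`_((size f).-1 - i).

Definition self_reciprocal (F : fieldType) (f : {poly F}) : Prop :=
  f != 0 /\ exists alpha : F, recip f = alpha *: f.

(* bar f(x) = x^m f(1/x), for deg f <= m: coefficient i is f_(m - i). *)
Definition polybar (F : fieldType) (m : nat) (f : {poly F}) : {poly F} :=
  \poly_(i < m.+1) f`_(m - i).

Definition lcmpoly (F : fieldType) (a b : {poly F}) : {poly F} :=
  (a * b) %/ gcdp a b.

Definition evalL (F : fieldType) (L : fieldExtType F) (p : {poly F}) (z : L) : L :=
  (map_poly (in_alg L) p).[z].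

(* K-span in K^2 (K a subfield of L, vectors represented in L * L) of two rows. *)
Definition span2 (F : fieldType) (L : fieldExtType F) (K : {vspace L})
  (r1 r2 : L * L) : L * L -> Prop :=
  fun c => exists a b : L, [/\ a \in K, b \in K &
     c = (a * r1.1 + b * r2.1, a * r1.2 + b * r2.2)].

Definition edual2 (F : fieldType) (L : fieldExtType F) (K : {vspace L})
  (D : L * L -> Prop) : L * L -> Prop :=
  fun c => [/\ c.1 \in K, c.2 \in K &
     forall d, D d -> c.1 * d.1 + c.2 * d.2 = 0].

(* Main.v *)
Require Import Defs.
From HB Require Import structures.
From mathcomp Require Import all_boot all_order all_algebra all_field.
From mathcomp Require Import fingroup cyclic.
Set Implicit Arguments. Unset Strict Implicit. Unset Printing Implicit Defensive.
Import GRing.Theory.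
Local Open Scope ring_scope.

Section H.
Variables (F : fieldType) (L : fieldExtType F).
Implicit Types (p q : {poly F}) (u : L).

Lemma evalLM p q u : evalL (p * q) u = evalL p u * evalL q u.
Proof. by rewrite /evalL rmorphM hornerM. Qed.

Lemma evalLD p q u : evalL (p + q) u = evalL p u + evalL q u.
Proof. by rewrite /evalL rmorphD hornerD. Qed.

Lemma evalL_dvd d p u : d %| p -> evalL d u = 0 -> evalL p u = 0.
Proof. by move/divpK=> <- h; rewrite evalLM h mulr0. Qed.

Lemma evalL_coprime p q u : coprimep p q -> evalL p u = 0 -> evalL q u = 0 -> False.
Proof.
rewrite -(coprimep_map (in_alg L)) => cop hp hq.
have hr : root (map_poly (in_alg L) p) u by apply/eqP.
by move: (coprimep_root cop hr); rewrite -/(evalL q u) hq eqxx.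
Qed.

Lemma evalL_gcd p q u : evalL p u = 0 -> evalL q u = 0 -> evalL (gcdp p q) u = 0.
Proof.
move=> hp hq; apply/eqP; rewrite /evalL gcdp_map; change (root (gcdp (map_poly (in_alg L) p) (map_poly (in_alg L) q)) u).
by rewrite root_gcd; apply/andP; split; apply/eqP.
Qed.

Lemma evalL_wide n p u : (size p <= n)%N -> evalL p u = \sum_(i < n) (p`_i)%:A * u ^+ i.
Proof.
move=> hs; rewrite /evalL (@horner_coef_wide _ n); last by rewrite size_map_poly.
by apply: eq_bigr => i _; rewrite coef_map.
Qed.

Lemma evalL_polybar n p u : u != 0 -> (size p <= n.+1)%N ->
  evalL (polybar n p) u = u ^+ n * evalL p u^-1.
Proof.
move=> u0 hs; rewrite (@evalL_wide n.+1) ?size_poly // (@evalL_wide n.+1) //.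
rewrite big_distrr /= (reindex_inj rev_ord_inj) /=; apply: eq_bigr => i _.
have hi : (n.+1 - i.+1 = n - i)%N by rewrite subSS.
rewrite hi /polybar coef_poly ltnS leq_subr.
have hin : (i <= n)%N by rewrite -ltnS.
rewrite (subKn hin).
rewrite mulrCA; congr (_ * _).
rewrite exprVn (expfB_cond (m:=n) (n:=i)); first by rewrite mulrC.
by rewrite (negPf u0).
Qed.

Lemma recip_polybar p : recip p = polybar (size p).-1 p.
Proof.
rewrite /recip /polybar; have [->|p0] := eqVneq p 0.
  by rewrite size_poly0 /=; apply/polyP => i; rewrite !coef_poly /= coef0; case: ifP.
by rewrite prednK // size_poly_gt0.
Qed.

Lemma evalL_recip p u : u != 0 -> evalL (recip p) u = u ^+ (size p).-1 * evalL p u^-1.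
Proof.
move=> u0; rewrite recip_polybar evalL_polybar //.
by case: (size p).
Qed.

Lemma evalLC c u : evalL c%:P u = c%:A.
Proof. by rewrite /evalL map_polyC hornerC. Qed.

Lemma evalLZ c p u : evalL (c *: p) u = c%:A * evalL p u.
Proof. by rewrite -mul_polyC evalLM evalLC. Qed.

Lemma selfrec_eval p u : self_reciprocal p -> u != 0 ->
  (evalL p u = 0 <-> evalL p u^-1 = 0).
Proof.
move=> [p0 [al hal]] u0.
have al0 : al != 0.
  apply/eqP=> al0; move: hal; rewrite al0 scale0r => /(congr1 (fun q => q`_0)).
  rewrite /recip coef_poly size_poly_gt0 p0 subn0 coef0 => /eqP.
  by rewrite -lead_coefE lead_coef_eq0 (negPf p0).
have := evalL_recip p u0; rewrite hal evalLZ => E.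
have upow : u ^+ (size p).-1 != 0 by rewrite expf_neq0.
split=> h.
  by move: E; rewrite h mulr0 => /esym/eqP; rewrite mulf_eq0 (negPf upow) /= => /eqP.
move: E; rewrite h mulr0 => /eqP; rewrite mulf_eq0 => /orP[|/eqP//].
by rewrite scaler_eq0 oner_eq0 orbF (negPf al0).
Qed.

Lemma evalL_sep p q u : separable_poly (p * q) -> evalL p u = 0 -> evalL q u = 0 -> False.
Proof. by rewrite separable_mul => /and3P[_ _ cop]; apply: evalL_coprime. Qed.

End H.

Lemma natr_m_neq0 (F : finFieldType) (m : nat) : (0 < m)%N -> coprime #|F| m -> m%:R != 0 :> F.
Proof.
move=> m0 cop; have [p pr pch] := finPcharP F.
have h1 : (1 : F) *+ #|F| = 0.
  have := @expg_cardG (FinRing.Zmodule_to_finGroup F) [set: F] (GRing.one F) (in_setT _).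
  rewrite cardsT; exact.
have pF : (p %| #|F|)%N by rewrite (dvdn_pcharf pch) h1.
apply/negP; rewrite -(dvdn_pcharf pch) => pm.
have : (p %| gcdn #|F| m)%N by rewrite dvdn_gcd pF pm.
rewrite (eqP cop) dvdn1 => /eqP p1.
by rewrite p1 in pr.
Qed.


Lemma core (F : fieldType) (L : fieldExtType F) (K : {vspace L}) (a b c a' b' c' : L) :
  1 \in K ->
  (a = 0 /\ b = 0 /\ c = 0) \/ (a' != 0 /\ c' != 0) \/ (a = 0 /\ c' != 0) \/
  (a = 0 /\ b' != 0) \/ (c = 0 /\ a * a' + b * b' != 0) \/ (c = 0 /\ b != 0 /\ c' != 0) ->
  forall v, span2 K (a, b) (0, c) v -> edual2 K (span2 K (a', b') (0, c')) v -> v = (0, 0).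
Proof.
move=> K1 H v [x [y [_ _ ->]]] [_ _ D].
have D1 := D (a', b'); have D2 := D (0, c').
have S1 : span2 K (a', b') (0, c') (a', b').
  by exists 1, 0; split; rewrite ?mem0v //= !mul1r !mul0r !addr0.
have S2 : span2 K (a', b') (0, c') (0, c').
  by exists 0, 1; split; rewrite ?mem0v //= !mul1r !mul0r !add0r.
move: (D1 S1) (D2 S2) => {D1 D2 D}.
rewrite /= !mulr0 !addr0.
rewrite add0r => D1 D2.
case: H => [[-> [-> ->]]|[[ha hc]|[[ha hc]|[[ha hb]|[[hc hab]|[hc [hb hc']]]]]]].
- by rewrite !mulr0 !addr0.
- move: D2 => /eqP; rewrite mulf_eq0 (negPf hc) orbF => /eqP D2.
  move: D1; rewrite D2 mul0r addr0 => /eqP; rewrite mulf_eq0 (negPf ha) orbF => /eqP ->.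
  by [].
- move: D2 => /eqP; rewrite mulf_eq0 (negPf hc) orbF => /eqP ->.
  by rewrite ha mulr0.
- move: D1; rewrite ha mulr0 mul0r add0r => /eqP; rewrite mulf_eq0 (negPf hb) orbF => /eqP ->.
  by [].
- move: D1; rewrite hc mulr0 addr0 -!mulrA -mulrDr => /eqP; rewrite mulf_eq0 (negPf hab) orbF => /eqP ->.
  by rewrite !mul0r.
- move: D2; rewrite hc mulr0 addr0 -mulrA => /eqP; rewrite mulf_eq0 mulf_eq0 (negPf hb) (negPf hc') !orbF => /eqP ->.
  by rewrite !mul0r.
Qed.

Theorem lemma3p7 (F : finFieldType) (m : nat) (g11 g12 g22 : {poly F})
  (Hm : (0 < m)%N) (Hqm : coprime #|F| m)
  (H11 : g11 %| 'X^m - 1) (H22 : g22 %| 'X^m - 1)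
  (H12 : (size g12 < size g22)%N)
  (Hdiv : g11 * g22 %| ('X^m - 1) * g12) :
  let g := gcdp g11 g22 in
  let l := ('X^m - 1) %/ lcmpoly g11 g22 in
  let g11' := g11 %/ g in
  let g22' := g22 %/ g in
  let r22 := gcdp g22' (recip g22') in
  let t22 := g22' %/ r22 in
  self_reciprocal g ->
  self_reciprocal l ->
  coprimep t22 g12 ->
  coprimep r22 (g11 * polybar m g11 + g12 * polybar m g12) ->
  forall (L : fieldExtType F) (xi : L), m.-primitive_root xi ->
  forall (h : {poly F}) (v : nat),
    irreducible_poly h -> h %| 'X^m - 1 -> ~ self_reciprocal h ->
    root (map_poly (in_alg L) h) (xi ^+ v) ->
  let z := xi ^+ v in
  let K := <<1%VS; z>>%VS in
  let C1 := span2 K (evalL g11 z, evalL g12 z) (0, evalL g22 z) in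
  let C2 := span2 K (evalL (polybar m g11) z, evalL (polybar m g12) z)
                    (0, evalL (polybar m g22) z) in
  (forall c, C1 c -> edual2 K C2 c -> c = (0, 0)) /\
  (forall c, C2 c -> edual2 K C1 c -> c = (0, 0)).
Proof.
move=> g l g11' g22' r22 t22 Hg Hl Ht Hr L xi Hxi h v Hirr Hh Hnsr Hroot z K C1 C2.
set P : {poly F} := 'X^m - 1.
have P0 : P != 0 by rewrite monic_neq0 // monic_Xn_sub_1.
have sepP : separable_poly P := separable_Xn_sub_1 (natr_m_neq0 Hm Hqm).
have g110 : g11 != 0 by apply: contra_neq P0 => e; move: H11; rewrite e dvd0p => /eqP.
have g220 : g22 != 0 by apply: contra_neq P0 => e; move: H22; rewrite e dvd0p => /eqP.
have g0 : g != 0 by rewrite /g gcdp_eq0 negb_and g110.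
have dg11 : g %| g11 := dvdp_gcdl g11 g22.
have dg22 : g %| g22 := dvdp_gcdr g11 g22.
have E22 : g22 = g22' * g by rewrite divpK.
have E11 : g11 = g11' * g by rewrite divpK.
have cop12' : coprimep g11' g22' by apply: coprimep_div_gcd; rewrite g110.
have sep22 : separable_poly g22 := dvdp_separable H22 sepP.
have cop22g : coprimep g22' g.
  by move: sep22; rewrite {1}E22 separable_mul => /and3P[].
have cop1 : coprimep g11 g22'.
  by rewrite E11 coprimepMl cop12' coprimep_sym cop22g.
have lcmE : lcmpoly g11 g22 = g11 * g22' by rewrite /lcmpoly -/g {1}E22 mulrA mulpK.
have dg22'P : g22' %| P by apply: dvdp_trans H22; rewrite E22 dvdp_mulr.
have dlcm : g11 * g22' %| P by rewrite Gauss_dvdp // H11 dg22'P.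
have EP : P = l * (g11 * g22') by rewrite /l lcmE divpK.
have dg12 : g %| g12.
  have dgP : g %| P := dvdp_trans dg11 H11.
  have EPg : P = (P %/ g) * g by rewrite divpK.
  have copR : coprimep g (P %/ g).
    by move: sepP; rewrite {1}EPg separable_mul coprimep_sym => /and3P[].
  have : g * g %| g * ((P %/ g) * g12).
    rewrite (dvdp_trans (dvdp_mul dg11 dg22) _) //.
    by apply: dvdp_trans Hdiv _; rewrite -/P {1}EPg -mulrA mulrCA dvdpp.
  by rewrite dvdp_mul2l // Gauss_dvdpr.
have dr22a : r22 %| g22' := dvdp_gcdl _ _.
have dr22b : r22 %| recip g22' := dvdp_gcdr _ _.
have E22' : g22' = t22 * r22 by rewrite /t22 divpK.
have r0 (u : L) : u ^+ m = 1 -> u != 0.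
  move=> um; apply/eqP => u0; move: um; rewrite u0 expr0n.
  by rewrite -(prednK Hm) /= => /eqP; rewrite eq_sym oner_eq0.
have rinv (u : L) : u ^+ m = 1 -> u^-1 ^+ m = 1 by move=> um; rewrite exprVn um invr1.
have evP (u : L) : u ^+ m = 1 -> evalL P u = 0.
  move=> um; rewrite /evalL /P rmorphB /= map_polyXn rmorph1 !hornerE um.
  by rewrite subrr.
have size_le (f : {poly F}) : f %| P -> (size f <= m.+1)%N.
  by move=> df; rewrite -(size_Xn_sub_1 F Hm) dvdp_leq.
have s11 := size_le _ H11.
have s22 := size_le _ H22.
have s12 : (size g12 <= m.+1)%N by apply: leq_trans (ltnW H12) s22.
have barE (u : L) (f : {poly F}) : u ^+ m = 1 -> (size f <= m.+1)%N ->
    evalL (polybar m f) u = evalL f u^-1.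
  by move=> um sf; rewrite evalL_polybar ?r0 // um mul1r.
have Fg (u : L) : evalL g u = 0 <-> evalL g11 u = 0 /\ evalL g22 u = 0.
  split; first by move=> e; split; apply: evalL_dvd e.
  by case=> e1 e2; apply: evalL_gcd.
have Fl (u : L) : u ^+ m = 1 -> (evalL l u = 0 <-> evalL g11 u != 0 /\ evalL g22 u != 0).
  move=> um; split.
    move=> el; split; apply/eqP => e.
      by apply: (evalL_sep (p := l) (q := g11 * g22') (u := u)); rewrite -?EP // evalLM e mul0r.
    move: e; rewrite E22 evalLM => /eqP; rewrite mulf_eq0 => /orP[/eqP e|/eqP e].
      by apply: (evalL_sep (p := l) (q := g11 * g22') (u := u)); rewrite -?EP // evalLM e mulr0.
    have e1 : evalL g11 u = 0 by apply: evalL_dvd e.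
    by apply: (evalL_sep (p := l) (q := g11 * g22') (u := u)); rewrite -?EP // evalLM e1 mul0r.
  case=> n1 n2; have := evP u um; rewrite EP !evalLM => /eqP.
  rewrite !mulf_eq0 (negPf n1) /= => /orP[/eqP //|/eqP e].
  by move: n2; rewrite E22 evalLM e mul0r eqxx.
have Fsg (u : L) : u != 0 -> (evalL g u = 0 <-> evalL g u^-1 = 0) := selfrec_eval Hg.
have Fsl (u : L) : u != 0 -> (evalL l u = 0 <-> evalL l u^-1 = 0) := selfrec_eval Hl.
have F22a (u : L) : evalL g22 u = 0 -> evalL g u != 0 -> evalL g22' u = 0.
  move=> e n; move: e; rewrite E22 evalLM => /eqP; rewrite mulf_eq0 (negPf n) orbF.
  by move/eqP.
have F22b (u : L) : evalL g22' u = 0 -> evalL g22 u = 0.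
  by move=> e; rewrite E22 evalLM e mul0r.
have Frec (u : L) : u != 0 -> (evalL (recip g22') u = 0 <-> evalL g22' u^-1 = 0).
  move=> u0; rewrite evalL_recip //; split => [/eqP|->]; last by rewrite mulr0.
  by rewrite mulf_eq0 expf_eq0 (negPf u0) andbF /= => /eqP.
have Ft (u : L) : evalL g22' u = 0 -> evalL (recip g22') u != 0 -> evalL g12 u != 0.
  move=> e n; apply/eqP => e12.
  have et : evalL t22 u = 0.
    move: e; rewrite E22' evalLM => /eqP; rewrite mulf_eq0 => /orP[/eqP //|/eqP er].
    by move: n; rewrite (evalL_dvd dr22b er) eqxx.
  exact: (evalL_coprime Ht et e12).
have Fr (u : L) : u ^+ m = 1 -> evalL g22' u = 0 -> evalL (recip g22') u = 0 ->
    evalL g11 u * evalL g11 u^-1 + evalL g12 u * evalL g12 u^-1 != 0.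
  move=> um e1 e2; have er : evalL r22 u = 0 by apply: evalL_gcd.
  apply/eqP => e; apply: (evalL_coprime Hr er).
  by rewrite evalLD !evalLM !barE.
have F12 (u : L) : evalL g u = 0 -> evalL g12 u = 0 := fun e => evalL_dvd dg12 e.
have key (u : L) : u ^+ m = 1 ->
  (evalL g11 u = 0 /\ evalL g12 u = 0 /\ evalL g22 u = 0) \/
  (evalL g11 u^-1 != 0 /\ evalL g22 u^-1 != 0) \/
  (evalL g11 u = 0 /\ evalL g22 u^-1 != 0) \/
  (evalL g11 u = 0 /\ evalL g12 u^-1 != 0) \/
  (evalL g22 u = 0 /\ evalL g11 u * evalL g11 u^-1 + evalL g12 u * evalL g12 u^-1 != 0) \/
  (evalL g22 u = 0 /\ evalL g12 u != 0 /\ evalL g22 u^-1 != 0).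
  move=> um.
  have u0 := r0 u um; have w0 : u^-1 != 0 by rewrite invr_eq0.
  have wm := rinv u um; have winv : u^-1^-1 = u := invrK u.
  case: (eqVneq (evalL g11 u) 0) => ha; case: (eqVneq (evalL g22 u) 0) => hc.
  - left; have eg : evalL g u = 0 by apply/Fg.
    by split=> //; split=> //; apply: F12.
  - have ng : evalL g u != 0 by apply/eqP => /Fg [_ e]; rewrite e eqxx in hc.
    have ngw : evalL g u^-1 != 0 := contra_neq (proj2 (Fsg u u0)) ng.
    have nl : evalL l u != 0 by apply/eqP => /(Fl u um) [n1 _]; rewrite ha eqxx in n1.
    have nlw : evalL l u^-1 != 0 := contra_neq (proj2 (Fsl u u0)) nl.
    case: (eqVneq (evalL g11 u^-1) 0) => ha'.
    + right; right; left; split=> //; apply/eqP => hc'.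
      by move/eqP: ngw; apply; apply/Fg.
    + have hc' : evalL g22 u^-1 = 0.
        apply/eqP; apply: contraNT nlw => hc'; apply/eqP/(Fl _ wm); split=> //.
      right; right; right; left; split=> //.
      apply: Ft; first exact: F22a hc' ngw.
      apply/eqP => /(Frec _ w0); rewrite winv => /F22b e.
      by rewrite e eqxx in hc.
  - have ng : evalL g u != 0 by apply/eqP => /Fg [e _]; rewrite e eqxx in ha.
    have ngw : evalL g u^-1 != 0 := contra_neq (proj2 (Fsg u u0)) ng.
    have nl : evalL l u != 0 by apply/eqP => /(Fl u um) [_ n2]; rewrite hc eqxx in n2.
    have nlw : evalL l u^-1 != 0 := contra_neq (proj2 (Fsl u u0)) nl.
    case: (eqVneq (evalL g22 u^-1) 0) => hc'.
    + right; right; right; right; left; split=> //.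
      apply: Fr => //; first exact: F22a hc ng.
      by apply/(Frec _ u0); apply: F22a hc' ngw.
    + right; right; right; right; right; split=> //; split=> //.
      apply: Ft; first exact: F22a hc ng.
      by apply/eqP => /(Frec _ u0) /F22b e; rewrite e eqxx in hc'.
  - right; left.
    have el : evalL l u = 0 by apply/(Fl u um).
    have elw : evalL l u^-1 = 0 by apply/(Fsl u u0).
    by have [] := (Fl _ wm).1 elw.
have K1 : 1 \in K by apply: (subvP (subv_adjoin _ z)); apply: memv_line.
have zm : z ^+ m = 1 by rewrite /z exprAC (prim_expr_order Hxi) expr1n.
have wm := rinv z zm.
have eC2 : C2 = span2 K (evalL g11 z^-1, evalL g12 z^-1) (0, evalL g22 z^-1).
  by rewrite /C2 !barE.
split => c; rewrite eC2 /C1; apply: core => //.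
  exact: key z zm.
by have := key z^-1 wm; rewrite invrK.
Qed.
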